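(* Let $\mathcal{G}$ be a locally compact étale groupoid acting (on the left) on a topological space $Y$ with anchor map $r_Y\colon Y\to\mathcal{G}^0$, and let $\mathcal{U}\subseteq\mathcal{G}$ be a slice. Let $\vartheta_Y(\mathcal{U})\colon r_Y^{-1}(s(\mathcal{U}))\to r_Y^{-1}(r(\mathcal{U}))$ be the partial homeomorphism $y\mapsto\gamma\cdot y$, where $\gamma\in\mathcal{U}$ is the unique element with $s(\gamma)=r_Y(y)$. Then $\vartheta_Y(\mathcal{U})$ extends uniquely to a partial homeomorphism \[\vartheta_{\beta_{\mathcal{G}^0}Y}(\mathcal{U})\colon(\beta_{\mathcal{G}^0}r_Y)^{-1}(s(\mathcal{U}))\xrightarrow{\sim}(\beta_{\mathcal{G}^0}r_Y)^{-1}(r(\mathcal{U}))\] of $\beta_{\mathcal{G}^0}Y$, where ''extends'' means $\vartheta_{\beta_{\mathcal{G}^0}Y}(\mathcal{U})\circ i_Y=i_Y\circ\vartheta_Y(\mathcal{U})$ for the canonical map $i_Y\colon Y\to\beta_{\mathcal{G}^0}Y$.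
   Context: $\mathcal{G}$ is an étale topological groupoid (range and source maps $r,s$ local homeomorphisms) whose object space $\mathcal{G}^0$ is Hausdorff and locally compact. A slice is an open subset $\mathcal{U}\subseteq\mathcal{G}$ on which $s$ and $r$ are injective (hence homeomorphisms onto open subsets of $\mathcal{G}^0$). A partial homeomorphism of a space is a homeomorphism between two open subsets. For a locally compact Hausdorff $B$ and a space $X$ with continuous $r\colon X\to B$, let $H_X\subseteq\mathrm{C_b}(X)$ be the closed linear span of the products $f\cdot(h\circ r)$, $f\in\mathrm{C_b}(X)$, $h\in\mathrm C_0(B)$; the relative Stone--Čech compactification $\beta_BX$ is the spectrum of the commutative C*-algebra $H_X$, $i\colon X\to\beta_BX$ sends $x$ to evaluation at $x$, and $\beta_Br\colon\beta_BX\to B$ is the unique continuous map with $\beta_Br\circ i=r$. Here $B=\mathcal{G}^0$ and $r=r_Y$. *)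

(* Defs.v *)
From HB Require Import structures.
From mathcomp Require Import all_boot all_order all_algebra.
From mathcomp Require Import all_classical all_reals all_analysis.

Set Implicit Arguments.
Unset Strict Implicit.
Unset Printing Implicit Defensive.

Import Order.TTheory GRing.Theory Num.Theory.
Import numFieldTopology.Exports numFieldNormedType.Exports.
Local Open Scope classical_set_scope.
Local Open Scope ring_scope.

Definition local_homeomorphism (T U : topologicalType) (f : T -> U) : Prop :=
  continuous f /\
  forall x : T, exists V : set T,
    [/\ open V, V x,
        (forall a b, V a -> V b -> f a = f b -> a = b) &
        (forall W : set T, open W -> W `<=` V -> open (f @` W))].

Definition partial_homeo (T : topologicalType) (D E : set T) (f : T -> T) : Prop :=
  [/\ f @` D = E,
      (forall a b, D a -> D b -> f a = f b -> a = b),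
      {within D, continuous f} &
      exists g : T -> T,
        [/\ g @` E = D, (forall a, D a -> g (f a) = a),
            (forall b, E b -> f (g b) = b) & {within E, continuous g}]].

(** Arrows [G], objects [O], source [s], range [r], units [u],
    multiplication [mul g h] (meaningful when [s g = r h]), inverse [inv]. *)
Definition is_groupoid (G O : Type) (s r : G -> O) (u : O -> G)
    (mul : G -> G -> G) (inv : G -> G) : Prop :=
  [/\ (forall x, s (u x) = x /\ r (u x) = x),
      (forall g h, s g = r h -> s (mul g h) = s h /\ r (mul g h) = r g),
      (forall g h k, s g = r h -> s h = r k ->
          mul (mul g h) k = mul g (mul h k)),
      (forall g, mul (u (r g)) g = g /\ mul g (u (s g)) = g) &
      (forall g, [/\ s (inv g) = r g, r (inv g) = s g,
                     mul (inv g) g = u (s g) & mul g (inv g) = u (r g)])].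

Definition is_lc_etale_groupoid (G O : topologicalType) (s r : G -> O)
    (u : O -> G) (mul : G -> G -> G) (inv : G -> G) : Prop :=
  [/\ is_groupoid s r u mul inv,
      continuous u /\ continuous inv,
      {within [set p : G * G | s p.1 = r p.2], continuous (fun p => mul p.1 p.2)},
      local_homeomorphism s /\ local_homeomorphism r &
      [/\ hausdorff_space O, locally_compact [set: O] & locally_compact [set: G]]].

(** Continuous left action of the groupoid on [Y] with anchor map [rY];
    [act g y] is meaningful when [s g = rY y]. *)
Definition is_groupoid_action (G O Y : topologicalType) (s r : G -> O)
    (u : O -> G) (mul : G -> G -> G) (rY : Y -> O) (act : G -> Y -> Y) : Prop :=
  [/\ continuous rY,
      (forall g y, s g = rY y -> rY (act g y) = r g),
      (forall y, act (u (rY y)) y = y),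
      (forall g h y, s g = r h -> s h = rY y -> act (mul g h) y = act g (act h y)) &
      {within [set p : G * Y | s p.1 = rY p.2], continuous (fun p => act p.1 p.2)}].

Definition is_slice (G O : topologicalType) (s r : G -> O) (U : set G) : Prop :=
  [/\ open U,
      (forall a b, U a -> U b -> s a = s b -> a = b) &
      (forall a b, U a -> U b -> r a = r b -> a = b)].

Section RelStoneCech.
Variables (R : realType) (X B : topologicalType) (rX : X -> B).

Definition Cb (f : X -> R) : Prop :=
  continuous f /\ exists M : R, forall x, `|f x| <= M.

Definition C0 (h : B -> R) : Prop :=
  continuous h /\
  forall e : R, 0 < e -> exists K : set B, compact K /\
     forall b, ~ K b -> `|h b| < e.

(** [H_X]: the sup-norm closure of the linear span of the products
    [f * (h \o rX)], [f] in [Cb], [h] in [C0]. *)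
Definition inH (F : X -> R) : Prop :=
  Cb F /\
  forall e : R, 0 < e -> exists (n : nat) (fs : 'I_n -> X -> R) (hs : 'I_n -> B -> R),
    (forall i, Cb (fs i) /\ C0 (hs i)) /\
    forall x, `|F x - \sum_(i < n) fs i x * hs i (rX x)| <= e.

Local Notation functionals := {ptws (X -> R) -> R}.

(** Characters of [H_X] (nonzero multiplicative linear functionals),
    normalised to vanish outside [H_X]. *)
Definition is_character (phi : functionals) : Prop :=
  [/\ (forall F, ~ inH F -> phi F = 0),
      (forall F G, inH F -> inH G -> phi (fun x => F x + G x) = phi F + phi G),
      (forall (a : R) F, inH F -> phi (fun x => a * F x) = a * phi F),
      (forall F G, inH F -> inH G -> phi (fun x => F x * G x) = phi F * phi G) &
      exists2 F, inH F & phi F <> 0].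

(** [beta_B X]: the spectrum of [H_X], as a subspace of [functionals]. *)
Definition betaX : set functionals := [set phi | is_character phi].

Definition iota_beta (x : X) : functionals :=
  fun F => if `[< inH F >] then F x else 0.

End RelStoneCech.

Notation functionals R X := {ptws (X -> R%type) -> R%type}.

Arguments Cb R {X} f.
Arguments C0 R {B} h.
Arguments inH R {X B} rX F.
Arguments is_character R {X B} rX phi.
Arguments betaX R {X B} rX _.
Arguments iota_beta R {X B} rX x _.

(* Main.v *)
Require Import Defs.
From HB Require Import structures.
From mathcomp Require Import all_boot all_order all_algebra.
From mathcomp Require Import all_classical all_reals all_analysis.
Local Open Scope classical_set_scope.
Local Open Scope ring_scope.
Import numFieldTopology.Exports numFieldNormedType.Exports.
Import Order.TTheory GRing.Theory Num.Theory.
Set Implicit Arguments.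
Unset Strict Implicit.
Unset Printing Implicit Defensive.
From mathcomp Require Import ring lra.
Section PartA.
Variables (R : realType) (Y O : topologicalType) (rY : Y -> O).
Hypothesis crY : continuous rY.

Lemma Cb_cst (c : R) : Cb R (fun _ : Y => c).
Proof. split; first exact: cst_continuous. by exists `|c|. Qed.

Lemma CbD (f g : Y -> R) : Cb R f -> Cb R g -> Cb R (fun x => f x + g x).
Proof.
move=> [cf [M fM]] [cg [N gN]]; split.
  by move=> x; apply: cvgD; [exact: cf|exact: cg].
exists (M + N) => x; apply: (le_trans (ler_normD _ _)); exact: lerD.
Qed.

Lemma CbM (f g : Y -> R) : Cb R f -> Cb R g -> Cb R (fun x => f x * g x).
Proof.
move=> [cf [M fM]] [cg [N gN]]; split.
  by move=> x; apply: cvgM; [exact: cf|exact: cg].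
exists (M * N) => x; rewrite normrM; apply: ler_pM => //.
Qed.

Lemma inH_Cb (F : Y -> R) : inH R rY F -> Cb R F.
Proof. by case. Qed.

Lemma inH_elem (f : Y -> R) (h : O -> R) :
  Cb R f -> C0 R h -> (exists M, forall z, `|h z| <= M) ->
  inH R rY (fun x => f x * h (rY x)).
Proof.
move=> Cf C0h [M hM]; split.
  apply: CbM => //; split; last by exists M.
  by move=> x; apply: continuous_comp; [exact: crY|exact: (proj1 C0h)].
move=> e e0; exists 1%N, (fun _ => f), (fun _ => h); split => // x.
by rewrite big_ord1 subrr normr0 ltW.
Qed.

Lemma inH_ideal (f F : Y -> R) : Cb R f -> inH R rY F ->
  inH R rY (fun x => f x * F x).
Proof.
move=> Cf [CF aF]; split; first exact: CbM.
have [cf [M fM]] := Cf.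
move=> e e0.
have M1 : 0 < `|M| + 1 by rewrite ltr_wpDl.
have [n [fs [hs [Hi Happ]]]] := aF (e / (`|M| + 1)) (divr_gt0 e0 M1).
exists n, (fun i x => f x * fs i x), hs; split.
  by move=> i; have [? ?] := Hi i; split => //; exact: CbM.
move=> x.
have -> : f x * F x - \sum_(i < n) f x * fs i x * hs i (rY x)
   = f x * (F x - \sum_(i < n) fs i x * hs i (rY x)).
  by rewrite mulrBr mulr_sumr; congr (_ - _); apply: eq_bigr => i _; rewrite mulrA.
rewrite normrM.
apply: (le_trans (ler_pM _ _ (_ : `|f x| <= `|M| + 1) (Happ x))) => //.
  by apply: (le_trans (fM x)); rewrite (le_trans (ler_norm M)) // lerDl.
by rewrite mulrC divfK // gt_eqF.
Qed.

Lemma inH_add (F G : Y -> R) : inH R rY F -> inH R rY G ->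
  inH R rY (fun x => F x + G x).
Proof.
move=> [CF aF] [CG aG]; split; first exact: CbD.
move=> e e0.
have e20 : 0 < e / 2 by rewrite divr_gt0.
have [n [fs [hs [Hi Happ]]]] := aF _ e20.
have [m [gs [ks [Ki Kapp]]]] := aG _ e20.
exists (n + m)%N,
  (fun i => match fintype.split i with inl j => fs j | inr j => gs j end),
  (fun i => match fintype.split i with inl j => hs j | inr j => ks j end); split.
  by move=> i; case: (fintype.split i).
move=> x; rewrite big_split_ord /=.
under eq_bigr => i _ do rewrite (unsplitK (inl i)).
under [X in _ - (_ + X)]eq_bigr => i _ do rewrite (unsplitK (inr i)).
have -> : forall a b c d : R, a + b - (c + d) = (a - c) + (b - d).
  by move=> a b c d; rewrite opprD addrACA.
apply: (le_trans (ler_normD _ _)).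
by rewrite (splitr e); apply: lerD.
Qed.

Lemma inH_mul (F G : Y -> R) : inH R rY F -> inH R rY G ->
  inH R rY (fun x => F x * G x).
Proof. by move=> /inH_Cb HF HG; exact: inH_ideal. Qed.

Lemma inH_scale (a : R) (F : Y -> R) : inH R rY F -> inH R rY (fun x => a * F x).
Proof. by move=> HF; apply: (inH_ideal (f := fun _ => a)) => //; exact: Cb_cst. Qed.

Lemma inH_0 : inH R rY (fun _ => 0).
Proof.
split; first exact: Cb_cst.
by move=> e e0; exists 0%N, (fun _ _ => 0), (fun _ _ => 0); split => [[]//|x]; rewrite big_ord0 subr0 normr0 ltW.
Qed.

End PartA.
Section PartB.
Variables (R : realType) (Y O : topologicalType) (rY : Y -> O).
Hypothesis crY : continuous rY.
Local Notation H := (inH R rY).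
Local Notation iota := (iota_beta R rY).

Section Char.
Variable p : functionals R Y.
Hypothesis Hp : is_character R rY p.

Lemma chN F : ~ H F -> p F = 0.
Proof. by case: Hp => pN _ _ _ _; exact: pN. Qed.

Lemma chD K F G : H F -> H G -> (forall x, K x = F x + G x) -> p K = p F + p G.
Proof.
by case: Hp => _ pD _ _ _ HF HG /funext ->; exact: pD.
Qed.

Lemma chZ K a F : H F -> (forall x, K x = a * F x) -> p K = a * p F.
Proof.
by case: Hp => _ _ pZ _ _ HF /funext ->; exact: pZ.
Qed.

Lemma chM K F G : H F -> H G -> (forall x, K x = F x * G x) -> p K = p F * p G.
Proof.
by case: Hp => _ _ _ pM _ HF HG /funext ->; exact: pM.
Qed.

Lemma ch0 K : (forall x, K x = 0) -> p K = 0.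
Proof.
move=> K0; have [_ _ _ _ [F HF _]] := Hp.
by rewrite (@chZ K 0 F) // ?mul0r // => x; rewrite K0 mul0r.
Qed.

Lemma char_term Hh F c : H Hh -> H F ->
  p (fun x => (F x - c) ^+ 2 * Hh x) = (p F - c) ^+ 2 * p Hh.
Proof.
move=> HH HF.
have HA : H (fun x => F x * Hh x) by exact: inH_mul.
have HB : H (fun x => - (2 * c) * (F x * Hh x)) by exact: inH_scale.
have HC : H (fun x => c ^+ 2 * Hh x) by exact: inH_scale.
have HA' : H (fun x => F x * (F x * Hh x)) by exact: inH_mul.
have HBC : H (fun x => - (2 * c) * (F x * Hh x) + c ^+ 2 * Hh x) by exact: inH_add.
rewrite (@chD _ _ _ HA' HBC); last by move=> x; ring.
have E1 := @chM (fun x => F x * (F x * Hh x)) F _ HF HA (fun x => erefl).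
have E2 := @chD (fun x => - (2 * c) * (F x * Hh x) + c ^+ 2 * Hh x) _ _ HB HC (fun x => erefl).
have E3 := @chZ (fun x => - (2 * c) * (F x * Hh x)) (- (2 * c)) _ HA (fun x => erefl).
have E4 := @chZ (fun x => c ^+ 2 * Hh x) (c ^+ 2) _ HH (fun x => erefl).
have E5 := @chM (fun x => F x * Hh x) F Hh HF HH (fun x => erefl).
rewrite E1 E2 E3 E4 E5.
by ring.
Qed.

Lemma H_ext F G : (forall x, F x = G x) -> H G -> H F.
Proof. by move=> /funext ->. Qed.

Definition Gf (F : Y -> R) : Y -> R := if `[< H F >] then F else (fun _ => 0).

Lemma H_Gf F : H (Gf F).
Proof. rewrite /Gf; case: asboolP => // _; exact: inH_0. Qed.

Definition SK (l : seq (Y -> R)) (x : Y) : R :=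
  \sum_(F <- l) (Gf F x - p (Gf F)) ^+ 2.

Lemma Cb_sq (g : Y -> R) (c : R) : Cb R g -> Cb R (fun x => (g x - c) ^+ 2).
Proof.
move=> Cg; have Cg' : Cb R (fun x => g x + (- c)) by apply: CbD => //; exact: Cb_cst.
exact: (CbM Cg' Cg').
Qed.

Lemma SK_H l Hh : H Hh -> H (fun x => SK l x * Hh x) /\ p (fun x => SK l x * Hh x) = 0.
Proof.
move=> HH; elim: l => [|a l [IH1 IH2]].
  have E : forall x, SK [::] x * Hh x = 0 * Hh x by move=> x; rewrite /SK big_nil.
  split; first by apply: (H_ext E); exact: inH_scale.
  by apply: ch0 => x; rewrite E mul0r.
have E : forall x, SK (a :: l) x * Hh x =
   (Gf a x - p (Gf a)) ^+ 2 * Hh x + SK l x * Hh x.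
  by move=> x; rewrite /SK big_cons mulrDl.
have Ht : H (fun x => (Gf a x - p (Gf a)) ^+ 2 * Hh x).
  apply: inH_ideal => //; apply: Cb_sq; apply: inH_Cb; exact: H_Gf.
split; first by apply: (H_ext E); exact: inH_add.
rewrite (chD Ht IH1 E) IH2 addr0 char_term //; last exact: H_Gf.
by rewrite subrr expr0n /= mul0r.
Qed.

Lemma SK_Cb l : Cb R (SK l).
Proof.
elim: l => [|a l IH].
  have -> : SK [::] = (fun _ => 0) by apply/funext => x; rewrite /SK big_nil.
  exact: Cb_cst.
have -> : SK (a :: l) = (fun x => (Gf a x - p (Gf a)) ^+ 2 + SK l x).
  by apply/funext => x; rewrite /SK big_cons.
apply: CbD => //; apply: Cb_sq; apply: inH_Cb; exact: H_Gf.
Qed.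

Lemma SK_ge0 l x : 0 <= SK l x.
Proof. by rewrite /SK; apply: sumr_ge0 => i _; exact: sqr_ge0. Qed.

Lemma SK_ge l F x : List.In F l -> (Gf F x - p (Gf F)) ^+ 2 <= SK l x.
Proof.
elim: l => [//|a l IH] /= [<-|HF]; rewrite /SK big_cons.
  by rewrite lerDl; exact: SK_ge0.
by rewrite (le_trans (IH HF)) // lerDr sqr_ge0.
Qed.

Lemma density (l : seq (Y -> R)) (e : R) : 0 < e ->
  exists y, forall F, List.In F l -> `|iota y F - p F| < e.
Proof.
move=> e0; apply: contrapT => Hn.
have Hy : forall y, exists F, List.In F l /\ e <= `|iota y F - p F|.
  move=> y; apply: contrapT => H1; apply: Hn; exists y => F HF.
  rewrite ltNge; apply/negP => Hle; apply: H1; exists F; split => //.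
have [_ _ _ _ [F0 HF0 pF0]] := Hp.
pose F1 := fun x => (p F0)^-1 * F0 x.
have HF1 : H F1 by exact: inH_scale.
have pF1 : p F1 = 1.
  by rewrite (@chZ F1 (p F0)^-1 F0) // mulVf //; exact/eqP.
pose K := SK (F1 :: l).
have Kge : forall x, e ^+ 2 <= K x.
  move=> x; have [F [lF eF]] := Hy x.
  case: (pselect (H F)) => HF; last first.
    move: eF; rewrite /iota_beta; case: asboolP => // _.
    by rewrite (chN HF) subrr normr0 => /(lt_le_trans e0); rewrite ltxx.
  have GF : Gf F = F by rewrite /Gf; case: asboolP.
  apply: (le_trans _ (@SK_ge (F1 :: l) F x (or_intror lF))); rewrite GF.
  move: eF; rewrite /iota_beta; case: asboolP => // _ eF.
  rewrite -(real_normK (num_real (F x - p F))) !expr2.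
  by apply: ler_pM => //; exact: ltW.
have Kpos : forall x, 0 < K x.
  by move=> x; apply: lt_le_trans (Kge x); rewrite exprn_gt0.
pose M := fun x => (K x)^-1.
have CbM' : Cb R M.
  have [cK _] := SK_Cb (F1 :: l).
  split.
    move=> x; apply: cvgV; first by rewrite gt_eqF.
    exact: cK.
  exists (e ^+ 2)^-1 => x; rewrite /M ger0_norm; last by rewrite invr_ge0 ltW.
  by rewrite lef_pV2 ?posrE ?exprn_gt0.
pose Hh := fun x => M x * F1 x.
have HHh : H Hh by exact: inH_ideal.
have [_ E] := SK_H (F1 :: l) HHh.
have EF : (fun x => SK (F1 :: l) x * Hh x) = F1.
  apply/funext => x; rewrite /Hh /M mulrA mulfV ?mul1r //.
  by rewrite gt_eqF // Kpos.
by move: E; rewrite EF pF1 => /eqP; rewrite oner_eq0.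
Qed.

End Char.
End PartB.
Section PtwsSec.
Import ArrowAsProduct.
Variables (R : realType) (Y : topologicalType).
Local Notation FN := (functionals R Y).

Lemma proj_cont (F : Y -> R) : continuous (fun q : FN => q F).
Proof.
move=> q; have : (nbhs q --> q) by [].
by move/(@pointwise_cvgP (Y -> R) R (nbhs q) q (nbhs_filter q)); apply.
Qed.

Lemma ptws_cvg (Fl : set_system FN) (p : FN) : Filter Fl ->
  (forall F, (fun q : FN => q F) @ Fl --> p F) -> Fl --> p.
Proof. by move=> FF H1; apply/(@pointwise_cvgP (Y -> R) R Fl p FF). Qed.

End PtwsSec.

Section PartC.
Variables (R : realType) (Y O : topologicalType) (rY : Y -> O).
Hypothesis crY : continuous rY.
Local Notation H := (inH R rY).
Local Notation iota := (iota_beta R rY).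
Local Notation FN := (functionals R Y).
Local Notation bX := (betaX R rY).

Lemma iota_char y : (exists F, H F /\ F y != 0) -> is_character R rY (iota y).
Proof.
move=> [F0 [HF0 F0y]].
have iE : forall F, H F -> iota y F = F y.
  by move=> F HF; rewrite /iota_beta; case: asboolP.
split.
- by move=> F HF; rewrite /iota_beta; case: asboolP.
- by move=> F G HF HG; rewrite !iE //; exact: inH_add.
- by move=> a F HF; rewrite !iE //; exact: inH_scale.
- by move=> F G HF HG; rewrite !iE //; exact: inH_mul.
- by exists F0 => //; rewrite iE //; exact/eqP.
Qed.

Definition basic (p : FN) (N : set FN) := exists l (e : R), 0 < e /\
  forall q : FN, (forall F, List.In F l -> `|q F - p F| < e) -> N q.

Lemma basic_filter p : Filter (basic p).
Proof.
constructor.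
- by exists [::], 1.
- move=> P Q [l1 [e1 [e10 H1]]] [l2 [e2 [e20 H2]]].
  exists (l1 ++ l2), (Num.min e1 e2); split; first by rewrite lt_min e10.
  move=> q Hq; split.
    by apply: H1 => F HF; apply: (lt_le_trans (Hq F _)); [apply: List.in_or_app; left|rewrite ge_min lexx].
  by apply: H2 => F HF; apply: (lt_le_trans (Hq F _)); [apply: List.in_or_app; right|rewrite ge_min lexx orbT].
- by move=> P Q PQ [l [e [e0 H1]]]; exists l, e; split => // q /H1; exact: PQ.
Qed.

Lemma nbhs_basic (p : FN) (N : set FN) : nbhs p N -> basic p N.
Proof.
move: N; apply: (ptws_cvg (basic_filter p)) => F A.
move=> /nbhs_ballP [e e0 eA].
exists [:: F], e; split => // q Hq; apply: eA.
by rewrite -ball_normE /= distrC; apply: Hq; left.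
Qed.

Lemma dense_eq (T : topologicalType) (hT : hausdorff_space T)
  (W : set FN) (p : FN) (f g : FN -> T) :
  (forall y, bX (iota y)) ->
  W p -> W `<=` bX -> (exists2 N, nbhs p N & forall q, N q -> bX q -> W q) ->
  f @ within W (nbhs p) --> f p -> g @ within W (nbhs p) --> g p ->
  (forall y, W (iota y) -> f (iota y) = g (iota y)) -> f p = g p.
Proof.
move=> ibX Wp WbX [N Np NW] cf cg fg.
apply: hT => A B fA gB.
have N1 := cf _ fA; have N2 := cg _ gB.
have : nbhs p (N `&` ((fun q => W q -> A (f q)) `&` (fun q => W q -> B (g q)))).
  by apply: filterI => //; apply: filterI.
move=> /nbhs_basic [l [e [e0 Hb]]].
have [y Hy] := density (WbX _ Wp) l e0.
have [Ny [Ay By]] := Hb _ Hy.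
have Wy : W (iota y) by apply: NW => //; exact: ibX.
by exists (f (iota y)); split; [exact: Ay|rewrite fg //; exact: By].
Qed.

End PartC.
Section Bump.
Variables (R : realType) (O : topologicalType).
Hypothesis hO : hausdorff_space O.
Hypothesis lcO : locally_compact [set: O].

Definition supp_in (A : set O) (k : O -> R) :=
  exists K, [/\ compact K, K `<=` A & forall z, ~ K z -> k z = 0].

Lemma bump_exists (A : set O) x : open A -> A x ->
  exists k : O -> R, [/\ continuous k, (forall z, 0 <= k z <= 1), k x != 0 &
    supp_in A k].
Proof.
move=> oA Ax.
have [//|C Cx [cptC clC]] := lcO (x := x); rewrite withinET in Cx.
have : nbhs x (C `&` A) by apply: filterI => //; exact: open_nbhs_nbhs.
rewrite nbhsE => -[W [oW Wx] WCA].
have clZ : closed (~` W) by exact: open_closedC.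
have nZx : ~ (~` W) x by [].
have := @locally_compact_completely_regular O R lcO hO x (~` W) clZ nZx.
move=> /(@uniform_separatorP _ R) [f [cf f01 fx0 fZ1]].
have fx : f x = 0 by apply: fx0; exists x.
have fZ : forall z, ~ W z -> f z = 1 by move=> z Wz; apply: fZ1; exists z.
have f01' : forall z, 0 <= f z <= 1.
  by move=> z; have := f01 (f z) (ex_intro2 _ _ z I erefl); rewrite /= in_itv.
exists ((fun _ => 0) \max (fun z => 2^-1 - f z)); split.
- move=> z; apply: continuous_max; first exact: cst_continuous.
  by apply: cvgB; [exact: cvg_cst|exact: cf].
- move=> z /=; rewrite le_max lexx /= ge_max ler01 /=.
  have /andP[f0 f1] := f01' z.
  lra.
- by rewrite /= fx subr0 gt_eqF // lt_max invr_gt0 ltr0n orbT.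
exists (C `&` [set z | f z <= 2^-1]); split.
- apply: compact_closedI => //.
  by apply: (@closed_comp _ _ _ [set r : R | r <= 2^-1]) => //; exact: closed_le.
- move=> z [Cz /= fz]; apply: (fun h => proj2 (WCA z h)).
  apply: contrapT => nW; have := fZ z nW; lra.
- move=> z nK /=; apply/eqP; rewrite eq_le le_max lexx /= ge_max lexx /=.
  rewrite ?andbT subr_le0; case: (pselect (C z)) => Cz.
    by rewrite leNgt; apply/negP => fz; apply: nK; split => //=; exact: ltW.
  have -> : f z = 1 by apply: fZ => Wz; apply: Cz; exact: (proj1 (WCA z Wz)).
  lra.
Qed.

End Bump.
Section Topo.

Lemma within_contP (T U : topologicalType) (A : set T) (f : T -> U) :
  {within A, continuous f} <-> (forall x, A x -> f @ within A (nbhs x) --> f x).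
Proof.
rewrite continuous_subspace_in; split.
  by move=> H1 x Ax; rewrite (nbhs_subspace_in Ax); apply: H1; rewrite inE.
move=> H1 x; rewrite inE => Ax.
by have := H1 x Ax; rewrite (nbhs_subspace_in Ax).
Qed.

Lemma cont_within (T U : topologicalType) (A : set T) (f : T -> U) x :
  {for x, continuous f} -> f @ within A (nbhs x) --> f x.
Proof. by move=> cf; apply: cvg_trans cf; apply: cvg_app; exact: cvg_within. Qed.

Lemma near_cont (T U : topologicalType) (F : set_system T) {FF : Filter F}
  (f g : T -> U) (l : U) :
  {near F, f =1 g} -> g @ F --> l -> f @ F --> l.
Proof.
move=> fg cg; apply: cvg_trans cg; apply: near_eq_cvg.
by apply: filterS fg => x ->.
Qed.

Lemma glue_cont (T : topologicalType) (R : realType) (f : T -> R) (A C : set T) :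
  open A -> closed C -> C `<=` A -> (forall x, A x -> {for x, continuous f}) ->
  (forall x, ~ C x -> f x = 0) -> continuous f.
Proof.
move=> oA clC CA cA f0 x.
case: (pselect (A x)) => Ax; first exact: cA.
have nCx : ~ C x by move=> /CA.
rewrite /continuous_at (f0 x nCx).
apply: (@near_cont _ _ (nbhs x) _ f (fun _ => 0)); last exact: cvg_cst.
have : nbhs x (~` C) by apply: open_nbhs_nbhs; split => //; exact: closed_openC.
by apply: filterS => z /f0.
Qed.

Lemma within_sub (T : topologicalType) (D E : set T) (x : T) :
  D `<=` E -> within D (nbhs x) `=>` within E (nbhs x).
Proof. by move=> DE P; rewrite /within /=; apply: filterS => q HE Dq; exact: HE (DE _ Dq). Qed.

Lemma cvg_within_sub (T U : topologicalType) (D E : set T) (f : T -> U) (x : T) :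
  D `<=` E -> f @ within E (nbhs x) --> f x -> f @ within D (nbhs x) --> f x.
Proof. by move=> DE cf; apply: cvg_trans cf; apply: cvg_app; exact: within_sub. Qed.

Lemma cvg_within_comp (T U V : topologicalType) (D : set T) (E : set U)
  (f : T -> U) (g : U -> V) (x : T) :
  f @ within D (nbhs x) --> f x -> (forall q, D q -> E (f q)) ->
  g @ within E (nbhs (f x)) --> g (f x) ->
  (g \o f) @ within D (nbhs x) --> g (f x).
Proof.
move=> cf DE cg; apply: cvg_comp cg => P /= HP.
have := cf _ HP; rewrite !nbhs_simpl /within /=.
by apply: filterS => q H1 Dq; exact: H1 Dq (DE _ Dq).
Qed.

Lemma near_neq0 (T : topologicalType) (R : realType) (F : set_system T) {FF : Filter F}
  (f : T -> R) (l : R) : f @ F --> l -> l != 0 -> \forall q \near F, f q != 0.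
Proof.
move=> cf l0; have : nbhs l [set r : R | r != 0].
  by apply: open_nbhs_nbhs; split => //; exact: open_neq.
by move/cf.
Qed.

End Topo.
Section TrSec.
Variables (R : realType) (Y O : topologicalType) (rY : Y -> O).
Hypothesis crY : continuous rY.
Hypothesis hO : hausdorff_space O.
Local Notation H := (inH R rY).
Variables (A : set O) (th : Y -> Y).
Hypothesis oA : open A.
Hypothesis thc : forall y, A (rY y) -> {for y, continuous th}.

Definition bumpA (k : O -> R) := [/\ continuous k, forall z, 0 <= k z <= 1 & supp_in A k].

Definition Tr (k : O -> R) (F : Y -> R) (y : Y) : R :=
  if `[< A (rY y) >] then k (rY y) * F (th y) else 0.

Lemma supp_C0 (B : set O) (k : O -> R) : continuous k -> supp_in B k -> C0 R k.
Proof.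
move=> ck [K [cK _ Kz]]; split => // e e0; exists K; split => // b nK.
by rewrite Kz // normr0.
Qed.

Lemma Tr_Cb k F : bumpA k -> Cb R F -> Cb R (Tr k F).
Proof.
move=> [ck k01 [K [cK KA Kz]]] [cF [M FM]]; split.
  apply: (@glue_cont _ R _ (rY @^-1` A) (rY @^-1` K)).
  - by apply: open_comp => // y _; exact: crY.
  - apply: closed_comp; first by move=> y _; exact: crY.
    exact: compact_closed.
  - by move=> y /KA.
  - move=> y Ay.
    rewrite /prop_for /continuous_at /=.
    have -> : Tr k F y = k (rY y) * F (th y) by rewrite /Tr; case: asboolP.
    apply: (@near_cont _ _ (nbhs y) _ _ (fun y => k (rY y) * F (th y))).
      have : nbhs y (rY @^-1` A).
        apply: open_nbhs_nbhs; split => //.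
        by apply: open_comp => // z _; exact: crY.
      by apply: filterS => z Az; rewrite /Tr; case: asboolP.
    apply: cvgM.
      by apply: (@continuous_comp _ _ _ rY k); [exact: crY|exact: ck].
    by apply: (@continuous_comp _ _ _ th F); [exact: thc|exact: cF].
  - by move=> y nK; rewrite /Tr; case: asboolP => // _; rewrite Kz // mul0r.
exists M => y; rewrite /Tr; case: asboolP => _.
  rewrite normrM; apply: (le_trans (ler_pM _ _ (_ : `|k (rY y)| <= 1) (FM (th y)))) => //.
    by have /andP[k0 k1] := k01 (rY y); rewrite ger0_norm.
  by rewrite mul1r.
by rewrite normr0 (le_trans _ (FM y)).
Qed.

Lemma Tr_H k F : bumpA k -> Cb R F -> H (fun y => Tr k F y * k (rY y)).
Proof.
move=> bk CF; apply: inH_elem => //; first exact: Tr_Cb.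
  by case: bk => ck _ sk; exact: (supp_C0 ck sk).
exists 1 => z; case: bk => _ k01 _; have /andP[k0 k1] := k01 z.
by rewrite ger0_norm.
Qed.

End TrSec.
Section ThSec.
Variables (R : realType) (Y O : topologicalType) (rY : Y -> O).
Local Notation H := (inH R rY).
Local Notation iota := (iota_beta R rY).
Local Notation FN := (functionals R Y).
Local Notation bX := (betaX R rY).
Variable betar : FN -> O.
Hypothesis crY : continuous rY.
Hypothesis hO : hausdorff_space O.
Hypothesis lcO : locally_compact [set: O].
Hypothesis cbetar : {within bX, continuous betar}.
Hypothesis betar_iota : forall y, betar (iota y) = rY y.

Lemma iota_bX y : bX (iota y).
Proof.
have [k [ck k01 kx [K [cK _ Kz]]]] := @bump_exists R O hO lcO setT (rY y) openT I.
apply: iota_char; exists (fun z => 1 * k (rY z)); split; last by rewrite mul1r.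
apply: inH_elem => //; first exact: Cb_cst.
  by apply: (@supp_C0 R O setT) => //; exists K.
by exists 1 => z; have /andP[k0 k1] := k01 z; rewrite ger0_norm.
Qed.

Lemma Cb_k2 (k : O -> R) : continuous k -> (forall z, 0 <= k z <= 1) ->
  Cb R (fun y => k (rY y) ^+ 2).
Proof.
move=> ck k01; split.
  move=> y; rewrite /continuous_at; apply: (@cvgM _ _ _ _ (fun y => k (rY y)) (fun y => k (rY y)));
  by apply: (@continuous_comp _ _ _ rY k); [exact: crY|exact: ck].
exists 1 => y; have /andP[k0 k1] := k01 (rY y).
by rewrite ger0_norm ?sqr_ge0 // expr_le1.
Qed.

Lemma H_mulr G (f : Y -> R) : H G -> Cb R f -> H (fun y => G y * f y).
Proof. by move=> HG Cf; apply: (H_ext (G := fun y => f y * G y)) => [y|]; [rewrite mulrC|exact: inH_ideal]. Qed.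

Lemma CB (phi : FN) (G : Y -> R) (h : O -> R) : bX phi -> H G -> continuous h ->
  H (fun y => G y * h (rY y)) -> phi (fun y => G y * h (rY y)) = phi G * h (betar phi).
Proof.
move=> bp HG ch HGh.
apply: (@dense_eq R Y O rY R (@Rhausdorff R) bX phi
  (fun q : FN => q (fun y => G y * h (rY y))) (fun q : FN => q G * h (betar q))) => //.
- exact: iota_bX.
- by exists setT => //; exact: filterT.
- exact: cont_within (@proj_cont R Y _ phi).
- apply: cvgM; first exact: cont_within (@proj_cont R Y _ phi).
  apply: (cvg_comp _ _ (proj1 (within_contP _ _) cbetar phi bp)); exact: ch.
- move=> y _; rewrite betar_iota /iota_beta.
  by rewrite (asboolT HGh) (asboolT HG).
Qed.

Lemma A_nbhs (A : set O) (p : FN) : open A -> bX p -> A (betar p) ->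
  exists2 N, nbhs p N & forall q, N q -> bX q -> (bX `&` betar @^-1` A) q.
Proof.
move=> oA bp Ap.
have := proj1 (within_contP _ _) cbetar p bp.
move=> /(_ A) HA.
have : nbhs (betar p) A by apply: open_nbhs_nbhs.
move=> /HA HN; exists (fun q => bX q -> A (betar q)) => //.
by move=> q Nq bq; split => //; exact: Nq.
Qed.

Variables (A B : set O) (tau : O -> O) (th th' : Y -> Y).
Hypothesis oA : open A.
Hypothesis oB : open B.
Hypothesis tauc : forall x, A x -> {for x, continuous tau}.
Hypothesis thr : forall y, A (rY y) -> rY (th y) = tau (rY y).
Hypothesis thc : forall y, A (rY y) -> {for y, continuous th}.
Hypothesis thc' : forall y, B (rY y) -> {for y, continuous th'}.
Hypothesis tauAB : forall x, A x -> B (tau x).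
Hypothesis th'th : forall y, A (rY y) -> th' (th y) = y.

Local Notation DA := (bX `&` betar @^-1` A).

Definition kch (x : O) : O -> R :=
  match pselect (A x) with
  | left Ax => projT1 (cid (bump_exists R hO lcO oA Ax))
  | right _ => fun _ => 0
  end.

Lemma kch_spec x : A x -> bumpA A (kch x) /\ kch x x != 0.
Proof.
move=> Ax; rewrite /kch; case: pselect => // Ax'.
by case: cid => k /= [ck k01 kx sk]; split.
Qed.

Definition Phi (k : O -> R) (phi : FN) (F : Y -> R) :=
  phi (fun y => Tr rY A th k F y * k (rY y)).

Definition Th (phi : FN) : FN :=
  if `[< A (betar phi) >] then
    (fun F => if `[< H F >] then
       Phi (kch (betar phi)) phi F / (kch (betar phi) (betar phi)) ^+ 2 else 0)
  else phi.

Lemma TrE (C : set O) (t : Y -> Y) (k : O -> R) (F : Y -> R) (y : Y) : C (rY y) -> Tr rY C t k F y = k (rY y) * F (t y).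
Proof. by move=> Cy; rewrite /Tr; case: asboolP. Qed.

Lemma TrN (C : set O) (t : Y -> Y) (k : O -> R) (F : Y -> R) (y : Y) : ~ C (rY y) -> Tr rY C t k F y = 0.
Proof. by move=> Cy; rewrite /Tr; case: asboolP. Qed.

Lemma Phi_indep phi k k' F : bX phi -> bumpA A k -> bumpA A k' -> H F ->
  Phi k phi F * k' (betar phi) ^+ 2 = Phi k' phi F * k (betar phi) ^+ 2.
Proof.
move=> bp bk bk' HF.
have CF := inH_Cb HF.
have HG := Tr_H crY hO oA thc bk CF.
have HG' := Tr_H crY hO oA thc bk' CF.
have [ck k01 _] := bk; have [ck' k01' _] := bk'.
have ck2 : continuous (fun z => k z ^+ 2).
  by move=> z; apply: (@cvgM _ _ _ _ k k); exact: ck.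
have ck2' : continuous (fun z => k' z ^+ 2).
  by move=> z; apply: (@cvgM _ _ _ _ k' k'); exact: ck'.
rewrite /Phi -(CB bp HG ck2' (H_mulr HG (Cb_k2 ck' k01'))).
rewrite -(CB bp HG' ck2 (H_mulr HG' (Cb_k2 ck k01))).
congr (phi _); apply/funext => y /=.
case: (pselect (A (rY y))) => Ay; first by rewrite !TrE //; ring.
by rewrite !TrN // !mul0r.
Qed.

Lemma Th_Phi phi k F : DA phi -> bumpA A k -> H F ->
  Phi k phi F = Th phi F * k (betar phi) ^+ 2.
Proof.
move=> [bp Ap] bk HF; have [bk0 k0x] := kch_spec Ap.
rewrite /Th (asboolT Ap) (asboolT HF).
have := Phi_indep bp bk bk0 HF => E.
by rewrite mulrAC -E mulfK // expf_neq0.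
Qed.

Lemma Th_iota y : A (rY y) -> Th (iota y) = iota (th y).
Proof.
move=> Ay; apply/funext => F.
have Ab : A (betar (iota y)) by rewrite betar_iota.
have [bk0 k0x] := kch_spec Ab.
rewrite /Th (asboolT Ab).
case: (pselect (H F)) => HF; last by rewrite /iota_beta !asboolF.
rewrite (asboolT HF) /Phi /iota_beta.
rewrite (asboolT (Tr_H crY hO oA thc bk0 (inH_Cb HF))) (asboolT HF).
rewrite betar_iota TrE //; move: k0x; rewrite betar_iota => k0x.
set c := kch _ _ in k0x *.
by rewrite [c * _ * c]mulrAC -expr2 mulrAC mulfV ?mul1r // expf_neq0.
Qed.

Lemma Th_cont p : DA p -> Th @ within DA (nbhs p) --> Th p.
Proof.
move=> [bp Ap]; apply: ptws_cvg => F.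
change ((fun q => Th q F) @ within DA (nbhs p) --> Th p F).
case: (pselect (H F)) => HF; last first.
  have -> : Th p F = 0 by rewrite /Th (asboolT Ap) asboolF.
  apply: (@near_cont _ _ (within DA (nbhs p)) _ (fun q => Th q F) (fun _ => 0)); last exact: cvg_cst.
  have W : within DA (nbhs p) DA by exact: withinT.
  apply: filterS W => q [_ Aq].
  by rewrite /Th (asboolT Aq) asboolF.
have [bk kx] := kch_spec Ap.
set k := kch (betar p) in bk kx *.
have [ck k01 _] := bk.
have kb : (k \o betar) @ within DA (nbhs p) --> k (betar p).
  apply: (cvg_within_sub (E := bX)); first by move=> q [].
  apply: (cvg_comp _ _ (proj1 (within_contP _ _) cbetar p bp)); exact: ck.
pose g := fun q : FN => Phi k q F / (k (betar q) * k (betar q)).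
have -> : Th p F = g p.
  by rewrite /g -expr2 (Th_Phi _ bk HF) ?mulfK ?expf_neq0 //; split.
apply: (@near_cont _ _ (within DA (nbhs p)) _ (fun q => Th q F) g).
  have N1 := @near_neq0 _ R (within DA (nbhs p)) _ (k \o betar) (k (betar p)) kb kx.
  have N1' := N1 (within_filter _ _).
  near=> q.
  have kq : k (betar q) != 0 by near: q; exact: N1'.
  have Dq : DA q by near: q; exact: near_withinT.
  by rewrite /g -expr2 (Th_Phi _ bk HF) ?mulfK ?expf_neq0.
apply: cvgM; first exact: cont_within (@proj_cont R Y _ p).
apply: cvgV; first by rewrite mulf_neq0.
exact: (cvgM kb kb).
Unshelve. all: by end_near.
Qed.

Lemma Th_char phi : DA phi -> bX (Th phi).
Proof.
move=> [bp Ap]; have [bk0 k0x] := kch_spec Ap.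
set k0 := kch (betar phi) in bk0 k0x *.
have c0 : k0 (betar phi) ^+ 2 != 0 by rewrite expf_neq0.
have ThE : forall F, H F -> Th phi F = Phi k0 phi F / k0 (betar phi) ^+ 2.
  by move=> F HF; rewrite /Th (asboolT Ap) (asboolT HF).
have HT : forall F, H F -> H (fun y => Tr rY A th k0 F y * k0 (rY y)).
  by move=> F HF; exact: (Tr_H crY hO oA thc bk0 (inH_Cb HF)).
have [ck0 k010 [K [cK KA Kz]]] := bk0.
have ck2 : continuous (fun z => k0 z ^+ 2).
  by move=> z; apply: (@cvgM _ _ _ _ k0 k0); exact: ck0.
split.
- by move=> F nHF; rewrite /Th (asboolT Ap) asboolF.
- move=> F G HF HG.
  rewrite (ThE _ (inH_add HF HG)) (ThE _ HF) (ThE _ HG) -mulrDl; congr (_ / _).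
  rewrite /Phi; apply: (chD bp (HT _ HF) (HT _ HG)) => y.
  case: (pselect (A (rY y))) => Ay; first by rewrite !TrE //; ring.
  by rewrite !TrN // !mul0r addr0.
- move=> a F HF.
  rewrite (ThE _ (inH_scale a HF)) (ThE _ HF) mulrA; congr (_ / _).
  rewrite /Phi; apply: (chZ bp (HT _ HF)) => y.
  case: (pselect (A (rY y))) => Ay; first by rewrite !TrE //; ring.
  by rewrite !TrN // !mul0r mulr0.
- move=> F G HF HG.
  have HFG := inH_mul HF HG.
  rewrite (ThE _ HFG) (ThE _ HF) (ThE _ HG).
  have E : Phi k0 phi F * Phi k0 phi G = Phi k0 phi (fun y => F y * G y) * k0 (betar phi) ^+ 2.
    rewrite /Phi -(CB bp (HT _ HFG) ck2 (H_mulr (HT _ HFG) (Cb_k2 ck0 k010))).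
    rewrite -(chM bp (HT _ HF) (HT _ HG) (K := fun y => Tr rY A th k0 (fun y => F y * G y) y * k0 (rY y) * k0 (rY y) ^+ 2)) //.
    move=> y; case: (pselect (A (rY y))) => Ay; first by rewrite !TrE //; ring.
    by rewrite !TrN // !mul0r.
  by rewrite mulrACA E -mulrA mulVKf.
- have [_ _ _ _ [F0 HF0 pF0]] := bp.
  have tB : B (tau (betar phi)) := tauAB Ap.
  have [k' [ck' k01' k'x sk']] := bump_exists R hO lcO oB tB.
  have bk' : bumpA B k' by split.
  pose Gp := fun z => Tr rY B th' k' F0 z * k' (rY z).
  have HGp : H Gp := Tr_H crY hO oB thc' bk' (inH_Cb HF0).
  exists Gp => //.
  rewrite (ThE _ HGp); apply/eqP; apply: mulf_neq0; last by rewrite invr_neq0.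
  pose m := fun z => if `[< A z >] then k0 z ^+ 2 * k' (tau z) ^+ 2 else 0.
  have m01 : forall z, 0 <= m z <= 1.
    move=> z; rewrite /m; case: asboolP => _; last by rewrite lexx ler01.
    have /andP[a0 a1] := k010 z; have /andP[b0 b1] := k01' (tau z).
    rewrite mulr_ge0 ?sqr_ge0 //= mulr_ile1 ?sqr_ge0 ?expr_le1 //.
  have cm : continuous m.
    apply: (@glue_cont _ R m A K) => //.
    - exact: compact_closed.
    - move=> z Az; rewrite /prop_for /continuous_at.
      have -> : m z = k0 z ^+ 2 * k' (tau z) ^+ 2 by rewrite /m asboolT.
      apply: (@near_cont _ _ (nbhs z) _ m (fun z => k0 z ^+ 2 * k' (tau z) ^+ 2)).
        have : nbhs z A by apply: open_nbhs_nbhs.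
        by apply: filterS => w Aw; rewrite /m asboolT.
      apply: cvgM; first exact: ck2.
      have ct : {for z, continuous (fun w => k' (tau w))}.
        by apply: (@continuous_comp _ _ _ tau k'); [exact: tauc|exact: ck'].
      exact: (@cvgM _ _ _ _ (fun w => k' (tau w)) (fun w => k' (tau w))).
    - by move=> z nK; rewrite /m; case: asboolP => _ //; rewrite Kz // expr2 !mul0r.
  have Cm : Cb R (fun y => m (rY y)).
    split.
      by move=> y; apply: (@continuous_comp _ _ _ rY m); [exact: crY|exact: cm].
    by exists 1 => y; have /andP[m0 m1] := m01 (rY y); rewrite ger0_norm.
  have Hm : H (fun y => F0 y * m (rY y)) := H_mulr HF0 Cm.
  have E : Phi k0 phi Gp = phi F0 * m (betar phi).
    rewrite /Phi -(CB bp HF0 cm Hm); congr (phi _); apply/funext => y.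
    case: (pselect (A (rY y))) => Ay.
      have Bt : B (rY (th y)) by rewrite thr //; exact: tauAB.
      rewrite TrE // /Gp (TrE _ _ _ Bt) (th'th Ay) (thr Ay) /m (asboolT Ay).
      by ring.
    by rewrite TrN // /m asboolF // !mul0r mulr0.
  rewrite E mulf_neq0 //; first exact/eqP.
  by rewrite /m (asboolT Ap) mulf_neq0 // expf_neq0.
Qed.

Lemma Th_betar phi : DA phi -> betar (Th phi) = tau (betar phi).
Proof.
move=> Dp; have [bp Ap] := Dp.
apply: (@dense_eq R Y O rY O hO DA phi (betar \o Th) (tau \o betar)) => //.
- exact: iota_bX.
- exact: (A_nbhs oA bp Ap).
- apply: (cvg_within_comp (E := bX)); first exact: Th_cont.
    by move=> q Dq; exact: Th_char.
  exact: (proj1 (within_contP _ _) cbetar _ (Th_char Dp)).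
- apply: (cvg_comp _ _ (cvg_within_sub _ (proj1 (within_contP _ _) cbetar phi bp))).
    by move=> q [].
  exact: tauc.
- move=> y [_ /=]; rewrite betar_iota => Ay.
  by rewrite Th_iota // betar_iota thr.
Qed.

Lemma Th_DB phi : DA phi -> (bX `&` betar @^-1` B) (Th phi).
Proof.
move=> Dp; split; first exact: Th_char.
by rewrite /= Th_betar //; apply: tauAB; case: Dp.
Qed.

End ThSec.
Section Gpd.

Lemma lh_open (G O : topologicalType) (f : G -> O) :
  local_homeomorphism f -> forall W, open W -> open (f @` W).
Proof.
move=> [cf lf] W oW; rewrite openE => _ [g Wg <-].
have [V [oV Vg _ oimg]] := lf g.
have oWV : open (f @` (W `&` V)) by apply: oimg; [exact: openI|move=> ? []].
have : nbhs (f g) (f @` (W `&` V)).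
  by apply: open_nbhs_nbhs; split => //; exists g.
by apply: filterS => _ [h [Wh _] <-]; exists h.
Qed.

Variables (G O : topologicalType) (U : set G) (g0 : G).

Definition gam (f : G -> O) (x : O) : G :=
  match pselect (exists g, U g /\ f g = x) with
  | left h => projT1 (cid h)
  | right _ => g0
  end.

Lemma gam_spec f x : (f @` U) x -> U (gam f x) /\ f (gam f x) = x.
Proof.
move=> [g Ug fg]; rewrite /gam; case: pselect => [h|[]]; last by exists g.
by case: cid.
Qed.

Lemma gam_eq f g : (forall a b, U a -> U b -> f a = f b -> a = b) -> U g ->
  gam f (f g) = g.
Proof.
move=> finj Ug.
have [U1 E1] : U (gam f (f g)) /\ f (gam f (f g)) = f g by apply: gam_spec; exists g.
exact: finj U1 Ug E1.
Qed.

Lemma gam_cont f : open U -> local_homeomorphism f ->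
  (forall a b, U a -> U b -> f a = f b -> a = b) ->
  forall x, (f @` U) x -> {for x, continuous (gam f)}.
Proof.
move=> oU lhf finj _ [g Ug <-]; rewrite /prop_for /continuous_at (gam_eq finj Ug).
move=> N /= Ng.
have : nbhs g (N `&` U) by apply: filterI => //; exact: open_nbhs_nbhs.
rewrite nbhsE => -[W [oW Wg] WNU].
have oFW := lh_open lhf oW.
have : nbhs (f g) (f @` W) by apply: open_nbhs_nbhs; split => //; exists g.
apply: filterS => _ [w Ww <-].
have [Nw Uw] := WNU w Ww.
by rewrite /= (gam_eq finj Uw).
Qed.

End Gpd.

Lemma comp_within_cont (T U V : topologicalType) (S : set U) (h : T -> U) (k : U -> V) (y : T) :
  {for y, continuous h} -> (\forall z \near y, S (h z)) -> S (h y) ->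
  {within S, continuous k} -> {for y, continuous (k \o h)}.
Proof.
move=> ch nS Sy ck.
apply: (cvg_comp _ _ _ (proj1 (within_contP _ _) ck _ Sy)).
move=> P /= HP.
have H1 := ch _ HP.
apply: filterS2 H1 nS => z H1 H2; exact: H1 H2.
Qed.
Section InvSec.
Variables (R : realType) (Y O : topologicalType) (rY : Y -> O).
Local Notation H := (inH R rY).
Local Notation iota := (iota_beta R rY).
Local Notation FN := (functionals R Y).
Local Notation bX := (betaX R rY).
Variable betar : FN -> O.
Hypothesis crY : continuous rY.
Hypothesis hO : hausdorff_space O.
Hypothesis lcO : locally_compact [set: O].
Hypothesis cbetar : {within bX, continuous betar}.
Hypothesis betar_iota : forall y, betar (iota y) = rY y.
Variables (A B : set O) (tau tau' : O -> O) (th th' : Y -> Y).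
Hypothesis oA : open A.
Hypothesis oB : open B.
Hypothesis tauc : forall x, A x -> {for x, continuous tau}.
Hypothesis tauc' : forall x, B x -> {for x, continuous tau'}.
Hypothesis thr : forall y, A (rY y) -> rY (th y) = tau (rY y).
Hypothesis thr' : forall y, B (rY y) -> rY (th' y) = tau' (rY y).
Hypothesis thc : forall y, A (rY y) -> {for y, continuous th}.
Hypothesis thc' : forall y, B (rY y) -> {for y, continuous th'}.
Hypothesis tauAB : forall x, A x -> B (tau x).
Hypothesis tauBA : forall x, B x -> A (tau' x).
Hypothesis th'th : forall y, A (rY y) -> th' (th y) = y.
Hypothesis thth' : forall y, B (rY y) -> th (th' y) = y.

Local Notation DA := (bX `&` betar @^-1` A).
Local Notation DB := (bX `&` betar @^-1` B).
Local Notation ThA := (Th rY betar hO lcO th oA).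
Local Notation ThB := (Th rY betar hO lcO th' oB).

Lemma ThA_DB phi : DA phi -> DB (ThA phi).
Proof. exact: (Th_DB crY hO lcO cbetar betar_iota oA oB tauc thr thc thc' tauAB th'th). Qed.

Lemma ThB_DA phi : DB phi -> DA (ThB phi).
Proof. exact: (Th_DB crY hO lcO cbetar betar_iota oB oA tauc' thr' thc' thc tauBA thth'). Qed.

Lemma ThA_cont p : DA p -> ThA @ within DA (nbhs p) --> ThA p.
Proof. exact: (Th_cont crY cbetar betar_iota thc). Qed.

Lemma ThB_cont p : DB p -> ThB @ within DB (nbhs p) --> ThB p.
Proof. exact: (Th_cont crY cbetar betar_iota thc'). Qed.

Lemma ThA_iota y : A (rY y) -> ThA (iota y) = iota (th y).
Proof. exact: (Th_iota crY hO lcO betar_iota oA thc). Qed.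

Lemma ThB_iota y : B (rY y) -> ThB (iota y) = iota (th' y).
Proof. exact: (Th_iota crY hO lcO betar_iota oB thc'). Qed.

Lemma ThBA phi : DA phi -> ThB (ThA phi) = phi.
Proof.
move=> Dp; have [bp Ap] := Dp.
apply/funext => F.
apply: (@dense_eq R Y O rY R (@Rhausdorff R) DA phi
  (fun q => ThB (ThA q) F) (fun q : FN => q F)) => //.
- exact: iota_bX.
- exact: (A_nbhs cbetar oA bp Ap).
- have c1 : (ThB \o ThA) @ within DA (nbhs phi) --> ThB (ThA phi).
    apply: (cvg_within_comp (E := DB)); first exact: ThA_cont.
      exact: ThA_DB.
    exact: ThB_cont (ThA_DB Dp).
  exact: (cvg_comp _ _ c1 (@proj_cont R Y F _)).
- exact: cont_within (@proj_cont R Y F phi).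
- move=> y [_ /=]; rewrite betar_iota => Ay.
  have By : B (rY (th y)) by rewrite thr //; exact: tauAB.
  by rewrite ThA_iota // ThB_iota // th'th.
Qed.

Lemma ThAB phi : DB phi -> ThA (ThB phi) = phi.
Proof.
move=> Dp; have [bp Ap] := Dp.
apply/funext => F.
apply: (@dense_eq R Y O rY R (@Rhausdorff R) DB phi
  (fun q => ThA (ThB q) F) (fun q : FN => q F)) => //.
- exact: iota_bX.
- exact: (A_nbhs cbetar oB bp Ap).
- have c1 : (ThA \o ThB) @ within DB (nbhs phi) --> ThA (ThB phi).
    apply: (cvg_within_comp (E := DA)); first exact: ThB_cont.
      exact: ThB_DA.
    exact: ThA_cont (ThB_DA Dp).
  exact: (cvg_comp _ _ c1 (@proj_cont R Y F _)).
- exact: cont_within (@proj_cont R Y F phi).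
- move=> y [_ /=]; rewrite betar_iota => By.
  have Ay : A (rY (th' y)) by rewrite thr' //; exact: tauBA.
  by rewrite ThB_iota // ThA_iota // thth'.
Qed.

Lemma ThA_partial : partial_homeo DA DB ThA.
Proof.
split.
- apply/seteqP; split => [_ [q Dq <-]|q Dq]; first exact: ThA_DB.
  by exists (ThB q); [exact: ThB_DA|exact: ThAB].
- by move=> a b Da Db E; rewrite -(ThBA Da) E ThBA.
- by apply/within_contP => x Dx; exact: ThA_cont.
- exists ThB; split.
  + apply/seteqP; split => [_ [q Dq <-]|q Dq]; first exact: ThB_DA.
    by exists (ThA q); [exact: ThA_DB|exact: ThBA].
  + by move=> a Da; exact: ThBA.
  + by move=> b Db; exact: ThAB.
  + by apply/within_contP => x Dx; exact: ThB_cont.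
Qed.

End InvSec.
Section Final.
Variables (R : realType) (G O Y : topologicalType)
    (s r : G -> O) (u : O -> G) (mul : G -> G -> G) (inv : G -> G)
    (rY : Y -> O) (act : G -> Y -> Y) (U : set G)
    (betar : functionals R Y -> O).
Local Notation iota := (iota_beta R rY).
Local Notation FN := (functionals R Y).
Local Notation bX := (betaX R rY).
Hypothesis lhs : local_homeomorphism s.
Hypothesis lhr : local_homeomorphism r.
Hypothesis cinv : continuous inv.
Hypothesis Hinv : forall g, [/\ s (inv g) = r g, r (inv g) = s g,
                     mul (inv g) g = u (s g) & mul g (inv g) = u (r g)].
Hypothesis hO : hausdorff_space O.
Hypothesis lcO : locally_compact [set: O].
Hypothesis crY : continuous rY.
Hypothesis Hr : forall g y, s g = rY y -> rY (act g y) = r g.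
Hypothesis Hu1 : forall y, act (u (rY y)) y = y.
Hypothesis Hmul : forall g h y, s g = r h -> s h = rY y -> act (mul g h) y = act g (act h y).
Hypothesis cact : {within [set p : G * Y | s p.1 = rY p.2], continuous (fun p => act p.1 p.2)}.
Hypothesis oU : open U.
Hypothesis sinj : forall a b, U a -> U b -> s a = s b -> a = b.
Hypothesis rinj : forall a b, U a -> U b -> r a = r b -> a = b.
Hypothesis cbetar : {within bX, continuous betar}.
Hypothesis betar_iota : forall y, betar (iota y) = rY y.
Variable g0 : G.

Local Notation A := (s @` U).
Local Notation B := (r @` U).
Local Notation gs := (gam U g0 s).
Local Notation gr := (gam U g0 r).
Definition thA (y : Y) := act (gs (rY y)) y.
Definition tauA (x : O) := r (gs x).
Definition thB (y : Y) := act (inv (gr (rY y))) y.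
Definition tauB (x : O) := s (gr x).

Let oA : open A := lh_open lhs oU.
Let oB : open B := lh_open lhr oU.

Let tauAc x : A x -> {for x, continuous tauA}.
Proof.
move=> Ax; apply: (@continuous_comp _ _ _ gs r).
  exact: (gam_cont oU lhs sinj Ax).
exact: (proj1 lhr).
Qed.

Let tauBc x : B x -> {for x, continuous tauB}.
Proof.
move=> Bx; apply: (@continuous_comp _ _ _ gr s).
  exact: (gam_cont oU lhr rinj Bx).
exact: (proj1 lhs).
Qed.

Let thAr y : A (rY y) -> rY (thA y) = tauA (rY y).
Proof. by move=> Ay; have [Ug sg] := gam_spec g0 Ay; rewrite /thA Hr. Qed.

Let thBr y : B (rY y) -> rY (thB y) = tauB (rY y).
Proof.
move=> By; have [Ug rg] := gam_spec g0 By; have [si ri _ _] := Hinv (gr (rY y)).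
by rewrite /thB Hr // ?ri // si.
Qed.

Let nearA y : A (rY y) -> \forall z \near y, A (rY z).
Proof.
move=> Ay; apply: open_nbhs_nbhs; split => //.
by apply: open_comp => // z _; exact: crY.
Qed.

Let thAc y : A (rY y) -> {for y, continuous thA}.
Proof.
move=> Ay.
have -> : thA = (fun p : G * Y => act p.1 p.2) \o (fun z => (gs (rY z), z)) by [].
apply: (comp_within_cont (S := [set p : G * Y | s p.1 = rY p.2])) => //.
- apply: cvg_pair; last exact: cvg_id.
  apply: (@continuous_comp _ _ _ rY gs); first exact: crY.
  exact: (gam_cont oU lhs sinj Ay).
- by apply: filterS (nearA Ay) => z Az /=; have [] := gam_spec g0 Az.
- by rewrite /=; have [] := gam_spec g0 Ay.
Qed.

Let nearB y : B (rY y) -> \forall z \near y, B (rY z).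
Proof.
move=> By; apply: open_nbhs_nbhs; split => //.
by apply: open_comp => // z _; exact: crY.
Qed.

Let thBc y : B (rY y) -> {for y, continuous thB}.
Proof.
move=> By.
have -> : thB = (fun p : G * Y => act p.1 p.2) \o (fun z => (inv (gr (rY z)), z)) by [].
apply: (comp_within_cont (S := [set p : G * Y | s p.1 = rY p.2])) => //.
- apply: cvg_pair; last exact: cvg_id.
  apply: (@continuous_comp _ _ _ (fun z => gr (rY z)) inv); last exact: cinv.
  apply: (@continuous_comp _ _ _ rY gr); first exact: crY.
  exact: (gam_cont oU lhr rinj By).
- apply: filterS (nearB By) => z Bz /=; have [_ rg] := gam_spec g0 Bz.
  by have [-> _ _ _] := Hinv (gr (rY z)).
- by rewrite /=; have [_ rg] := gam_spec g0 By; have [-> _ _ _] := Hinv (gr (rY y)).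
Qed.

Let tauAB x : A x -> B (tauA x).
Proof. by move=> Ax; have [Ug _] := gam_spec g0 Ax; exists (gs x). Qed.

Let tauBA x : B x -> A (tauB x).
Proof. by move=> Bx; have [Ug _] := gam_spec g0 Bx; exists (gr x). Qed.

Let thBA y : A (rY y) -> thB (thA y) = y.
Proof.
move=> Ay; have [Ug sg] := gam_spec g0 Ay.
set g := gs (rY y) in Ug sg *.
have [si ri ig gi] := Hinv g.
rewrite /thB (thAr Ay) /tauA -/g (gam_eq g0 rinj Ug) /thA -/g.
by rewrite -Hmul // ig sg Hu1.
Qed.

Let thAB y : B (rY y) -> thA (thB y) = y.
Proof.
move=> By; have [Ug rg] := gam_spec g0 By.
set g := gr (rY y) in Ug rg *.
have [si ri ig gi] := Hinv g.
rewrite /thA (thBr By) /tauB -/g (gam_eq g0 sinj Ug) /thB -/g.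
by rewrite -Hmul // ?ri // ?si // gi rg Hu1.
Qed.

Lemma main_g0 :
  let D := betaX R rY `&` betar @^-1` (s @` U) in
  let E := betaX R rY `&` betar @^-1` (r @` U) in
  exists theta : functionals R Y -> functionals R Y,
    [/\ partial_homeo D E theta,
        (forall g y, U g -> s g = rY y ->
           theta (iota_beta R rY y) = iota_beta R rY (act g y)) &
        (forall theta' : functionals R Y -> functionals R Y,
           partial_homeo D E theta' ->
           (forall g y, U g -> s g = rY y ->
              theta' (iota_beta R rY y) = iota_beta R rY (act g y)) ->
           forall p, D p -> theta' p = theta p)].
Proof.
move=> D E.
exists (Th rY betar hO lcO thA oA); split.
- exact: (ThA_partial crY hO lcO cbetar betar_iota oA oB tauAc tauBc thAr thBr
           thAc thBc tauAB tauBA thBA thAB).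
- move=> g y Ug sg.
  have Ay : A (rY y) by exists g.
  rewrite (ThA_iota crY hO lcO betar_iota oA thAc Ay) /thA -sg.
  by rewrite (gam_eq g0 sinj Ug).
- move=> theta' [_ _ ct' _] ext' p Dp.
  have [bp Ap] := Dp.
  apply/funext => F.
  apply: (@dense_eq R Y O rY R (@Rhausdorff R) D p
    (fun q => theta' q F) (fun q => Th rY betar hO lcO thA oA q F)) => //.
  + exact: iota_bX.
  + by move=> q [].
  + exact: (A_nbhs cbetar oA bp Ap).
  + exact: (cvg_comp _ _ (proj1 (within_contP _ _) ct' p Dp) (@proj_cont R Y F _)).
  + exact: (cvg_comp _ _ (ThA_cont crY cbetar betar_iota thAc Dp) (@proj_cont R Y F _)).
  + move=> y [_ /=]; rewrite betar_iota => -[g Ug sg].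
    rewrite (ext' g y Ug sg).
    rewrite (ThA_iota crY hO lcO betar_iota oA thAc (ex_intro2 _ _ g Ug sg)) /thA -sg.
    by rewrite (gam_eq g0 sinj Ug).
Qed.

End Final.
Theorem proposition5p1 (R : realType) (G O Y : topologicalType)
    (s r : G -> O) (u : O -> G) (mul : G -> G -> G) (inv : G -> G)
    (rY : Y -> O) (act : G -> Y -> Y) (U : set G)
    (betar : functionals R Y -> O) :
  is_lc_etale_groupoid s r u mul inv ->
  is_groupoid_action s r u mul rY act ->
  is_slice s r U ->
  (* betar is the (unique) continuous map beta r_Y : beta Y -> O
     with betar \o iota_beta = r_Y *)
  {within betaX R rY, continuous betar} ->
  (forall y, betar (iota_beta R rY y) = rY y) ->
  let D := betaX R rY `&` betar @^-1` (s @` U) in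
  let E := betaX R rY `&` betar @^-1` (r @` U) in
  exists theta : functionals R Y -> functionals R Y,
    [/\ partial_homeo D E theta,
        (forall g y, U g -> s g = rY y ->
           theta (iota_beta R rY y) = iota_beta R rY (act g y)) &
        (forall theta' : functionals R Y -> functionals R Y,
           partial_homeo D E theta' ->
           (forall g y, U g -> s g = rY y ->
              theta' (iota_beta R rY y) = iota_beta R rY (act g y)) ->
           forall p, D p -> theta' p = theta p)].
Proof.
move=> [[Hu Hsm Hass Hunit Hinv] [cu cinv] cmul [lhs lhr] [hO lcO lcG]].
move=> [crY Hr Hu1 Hmul cact] [oU sinj rinj] cbetar betar_iota.
case: (pselect (exists g, U g)) => [[g0 _]|nU].
  exact: (main_g0 lhs lhr cinv Hinv hO lcO crY Hr Hu1 Hmul cact oU sinj rinj cbetar betar_iota g0).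
move=> D E.
have D0 : forall p, ~ D p by move=> p [_ [g Ug _]]; apply: nU; exists g.
have E0 : forall p, ~ E p by move=> p [_ [g Ug _]]; apply: nU; exists g.
exists id; split.
- split.
  + by apply/seteqP; split => [q [p Dp _]|q Eq]; [case: (D0 _ Dp)|case: (E0 _ Eq)].
  + by move=> a b Da; case: (D0 _ Da).
  + by apply/within_contP => x Dx; case: (D0 _ Dx).
  + exists id; split.
    * by apply/seteqP; split => [q [p Ep _]|q Dq]; [case: (E0 _ Ep)|case: (D0 _ Dq)].
    * by move=> a Da; case: (D0 _ Da).
    * by move=> b Eb; case: (E0 _ Eb).
    * by apply/within_contP => x Ex; case: (E0 _ Ex).
- by move=> g y Ug; case: nU; exists g.
- by move=> t' _ _ p Dp; case: (D0 _ Dp).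
Qed.
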